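(* Let $\rho>0$, $\xi\in\mathbb{R}$, and $H_0=\frac{1}{2(1+\rho r^2)}\big(P_r^2+\frac{P_\phi^2}{r^2}+\xi r^2\big)$ on $(r,\phi)\in(0,\infty)\times\mathbb{S}^1$. Consider trajectories of the Hamiltonian flow on a level set $H_0=E$, $P_\phi=L>0$, with $\phi$ normalized (by a rotation) so that $\phi=0$ at a point where $r$ is minimal. Put $$e=\sqrt{1+\frac{L^2}{E^2}(2\rho E-\xi)},\qquad E_\pm=L^2\big(-\rho\pm\sqrt{\rho^2+\xi/L^2}\big).$$ (a) If $E\ge\xi/(2\rho)$: for $E=0$ the trajectories are $\frac{L}{r^2}=\sqrt{|\xi|}\cos(2\phi)$, and for $E\ne0$ they are $\frac{L^2}{|E|r^2}=\mathrm{sign}(E)+e\cos(2\phi)$. (b) If $E_+<E<\xi/(2\rho)$: the trajectories are $\frac{L^2}{Er^2}=1+e\cos(2\phi)$; in this case they are closed. *)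

(* Defs.v *)
From Stdlib Require Export Reals.
Open Scope R_scope.

Definition H0 (rho xi : R) (r phi Pr Pphi : R) : R :=
  (Pr ^ 2 + Pphi ^ 2 / r ^ 2 + xi * r ^ 2) / (2 * (1 + rho * r ^ 2)).

(* A (global-in-time) trajectory of the Hamiltonian flow of H on (0,oo) x S^1,
   with phi lifted to R. *)
Definition hamiltonian_trajectory (H : R -> R -> R -> R -> R)
  (r phi Pr Pphi : R -> R) : Prop :=
  forall t : R, 0 < r t /\
    exists dr dphi dPr dPphi : R,
      derivable_pt_lim r t dr /\
      derivable_pt_lim phi t dphi /\
      derivable_pt_lim Pr t dPr /\
      derivable_pt_lim Pphi t dPphi /\
      derivable_pt_lim (fun p => H (r t) (phi t) p (Pphi t)) (Pr t) dr /\
      derivable_pt_lim (fun p => H (r t) (phi t) (Pr t) p) (Pphi t) dphi /\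
      derivable_pt_lim (fun x => H x (phi t) (Pr t) (Pphi t)) (r t) (- dPr) /\
      derivable_pt_lim (fun y => H (r t) y (Pr t) (Pphi t)) (phi t) (- dPphi).

Definition sgn (x : R) : R := if Rlt_dec 0 x then 1 else if Rlt_dec x 0 then -1 else 0.

Definition ecc (rho xi E L : R) : R :=
  sqrt (1 + L ^ 2 / E ^ 2 * (2 * rho * E - xi)).

Definition Eplus (rho xi L : R) : R :=
  L ^ 2 * (- rho + sqrt (rho ^ 2 + xi / L ^ 2)).

(* Main.v *)
Require Import Defs.
From Stdlib Require Import Reals Lra Psatz.
From Coquelicot Require Coquelicot.
Open Scope R_scope.

Module Helpers.
Import Coquelicot.Coquelicot.
Lemma dH_Pr rho xi r phi p q : 0 < r -> 0 < rho ->
  derivable_pt_lim (fun p => H0 rho xi r phi p q) p (p / (1 + rho * r ^ 2)).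
Proof.
  intros Hr Hrho. apply is_derive_Reals. unfold H0.
  auto_derive. { nra. } field. nra.
Qed.

Lemma dH_Pphi rho xi r phi p q : 0 < r -> 0 < rho ->
  derivable_pt_lim (fun q => H0 rho xi r phi p q) q (q / (r^2 * (1 + rho * r ^ 2))).
Proof.
  intros Hr Hrho. apply is_derive_Reals. unfold H0.
  auto_derive. { split; nra. } field. split; nra.
Qed.

Lemma dH_r rho xi r phi p q : 0 < r -> 0 < rho ->
  derivable_pt_lim (fun r => H0 rho xi r phi p q) r
   (((-2 * q^2 / r^3 + 2 * xi * r) * (2 * (1 + rho * r^2)) - (p ^ 2 + q ^ 2 / r ^ 2 + xi * r ^ 2) * (4 * rho * r)) / (2 * (1 + rho * r ^ 2))^2).
Proof.
  intros Hr Hrho. apply is_derive_Reals. unfold H0.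
  auto_derive. { repeat split; nra. } field. split; nra.
Qed.


Ltac rwD D := match type of D with is_derive ?g ?t ?l =>
  match goal with |- context [Derive ?f t] => rewrite (is_derive_unique f t l D) end end.

Section Traj.
Variables (rho xi E L : R) (r phi Pr Pphi : R -> R).
Hypothesis Hrho : 0 < rho.
Hypothesis HL : 0 < L.
Hypothesis Htr : hamiltonian_trajectory (H0 rho xi) r phi Pr Pphi.
Hypothesis HE : forall t, H0 rho xi (r t) (phi t) (Pr t) (Pphi t) = E.
Hypothesis HP : forall t, Pphi t = L.

Lemma rpos t : 0 < r t.
Proof. apply (Htr t). Qed.

Lemma energy t : Pr t ^ 2 = 2 * E * (1 + rho * r t ^ 2) - L^2 / r t ^ 2 - xi * r t ^ 2.
Proof.
  pose proof (rpos t). pose proof (HE t) as He. rewrite HP in He. unfold H0 in He.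
  rewrite <- He. field. split; nra.
Qed.

Lemma derivs t :
  is_derive r t (Pr t / (1 + rho * r t ^ 2)) /\
  is_derive phi t (L / (r t ^ 2 * (1 + rho * r t ^ 2))) /\
  is_derive Pr t ((L^2 / r t ^ 3 - (xi - 2 * E * rho) * r t) / (1 + rho * r t ^ 2)).
Proof.
  pose proof (rpos t) as Hr.
  destruct (Htr t) as [_ [dr [dphi [dPr [dPphi [H1 [H2 [H3 [H4 [H5 [H6 [H7 H8]]]]]]]]]]]].
  pose proof (uniqueness_limite _ _ _ _ H5 (dH_Pr rho xi _ (phi t) (Pr t) (Pphi t) Hr Hrho)) as E1.
  pose proof (uniqueness_limite _ _ _ _ H6 (dH_Pphi rho xi _ (phi t) (Pr t) (Pphi t) Hr Hrho)) as E2.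
  pose proof (uniqueness_limite _ _ _ _ H7 (dH_r rho xi _ (phi t) (Pr t) (Pphi t) Hr Hrho)) as E3.
  rewrite HP in E2, E3.
  split; [|split]; apply is_derive_Reals.
  - rewrite <- E1; exact H1.
  - rewrite <- E2; exact H2.
  - replace ((L^2 / r t ^ 3 - (xi - 2 * E * rho) * r t) / (1 + rho * r t ^ 2)) with dPr; [exact H3|].
    assert (dPr = - (((-2 * L^2 / r t^3 + 2 * xi * r t) * (2 * (1 + rho * r t^2)) - (Pr t ^ 2 + L ^ 2 / r t ^ 2 + xi * r t ^ 2) * (4 * rho * r t)) / (2 * (1 + rho * r t ^ 2))^2)) by lra.
    rewrite H. rewrite (energy t). field. split; nra.
Qed.

Definition X t := L^2 / r t ^ 2 - E.
Definition Y t := L * Pr t / r t.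
Definition w t := 2 * L / (r t ^ 2 * (1 + rho * r t ^ 2)).

Lemma dX t : is_derive X t (- Y t * w t).
Proof.
  destruct (derivs t) as [D1 [D2 D3]]. pose proof (rpos t).
  unfold X. auto_derive.
  { split; [exists (Pr t / (1 + rho * r t ^ 2)); exact D1|]. split; [nra|auto]. }
  rwD D1. unfold Y, w. field. split; nra.
Qed.

Lemma dY t : is_derive Y t (X t * w t).
Proof.
  destruct (derivs t) as [D1 [D2 D3]]. pose proof (rpos t).
  unfold Y. auto_derive.
  { repeat split; try (eexists; eassumption); lra. }
  rwD D1. rwD D3. unfold X, w.
  pose proof (energy t) as En.
  assert (Hx : xi * r t ^ 2 = 2 * E * (1 + rho * r t ^ 2) - L ^ 2 / r t ^ 2 - Pr t ^ 2) by lra.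
  assert (Hxi : xi = (2 * E * (1 + rho * r t ^ 2) - L ^ 2 / r t ^ 2 - Pr t ^ 2) / r t ^ 2).
  { apply (Rmult_eq_reg_r (r t ^ 2)); [rewrite Hx; field; lra | nra]. }
  rewrite Hxi. field. split; nra.
Qed.


Definition C t := X t * cos (2 * phi t) + Y t * sin (2 * phi t).
Definition S t := X t * sin (2 * phi t) - Y t * cos (2 * phi t).

Lemma dC t : is_derive C t 0.
Proof.
  destruct (derivs t) as [D1 [D2 D3]]. pose proof (dX t) as DX. pose proof (dY t) as DY.
  unfold C. auto_derive.
  { repeat split; try (eexists; eassumption). }
  rwD DX. rwD DY. rwD D2. unfold w. field. split; pose proof (rpos t); nra.
Qed.

Lemma dS t : is_derive S t 0.
Proof.
  destruct (derivs t) as [D1 [D2 D3]]. pose proof (dX t) as DX. pose proof (dY t) as DY.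
  unfold S. auto_derive.
  { repeat split; try (eexists; eassumption). }
  rwD DX. rwD DY. rwD D2. unfold w. field. split; pose proof (rpos t); nra.
Qed.

Lemma const_of (f : R -> R) : (forall t, is_derive f t 0) -> forall a b, f a = f b.
Proof.
  intros Hd a b. destruct (Rtotal_order a b) as [H|[H|H]].
  - apply eq_is_derive; [intros; apply Hd | exact H].
  - subst; reflexivity.
  - symmetry; apply eq_is_derive; [intros; apply Hd | exact H].
Qed.

Definition A2 := E ^ 2 + L ^ 2 * (2 * rho * E - xi).

Lemma XYsq t : X t ^ 2 + Y t ^ 2 = A2.
Proof.
  pose proof (rpos t). unfold X, Y, A2.
  replace ((L * Pr t / r t) ^ 2) with (L^2 * Pr t ^ 2 / r t ^ 2) by (field; lra).
  rewrite energy. field. lra.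
Qed.


Variable t0 : R.
Hypothesis Ht0 : phi t0 = 0.
Hypothesis Hmin : forall t, r t0 <= r t.

Lemma Pr0 : Pr t0 = 0.
Proof.
  destruct (derivs t0) as [D1 _]. pose proof (rpos t0).
  pose proof (proj1 (is_derive_Reals _ _ _) D1) as D.
  pose proof (deriv_minimum r (t0 - 1) (t0 + 1) t0 (exist _ _ D)) as M.
  simpl in M. assert (Pr t0 / (1 + rho * r t0 ^ 2) = 0) as Z.
  { apply M; try lra. intros; apply Hmin. }
  assert (0 < 1 + rho * r t0 ^ 2) by nra.
  apply (Rmult_eq_reg_r (/ (1 + rho * r t0 ^ 2))); [|apply Rinv_neq_0_compat; lra].
  rewrite Rmult_0_l. exact Z.
Qed.

Definition X0 := X t0.

Lemma XY_form t : X t = X0 * cos (2 * phi t) /\ Y t = X0 * sin (2 * phi t).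
Proof.
  assert (HC : C t = X0).
  { rewrite (const_of C dC t t0). unfold C, X0, Y. rewrite Ht0, Pr0. 
    replace (2 * 0) with 0 by ring. rewrite cos_0, sin_0. field. apply Rgt_not_eq, rpos. }
  assert (HS : S t = 0).
  { rewrite (const_of S dS t t0). unfold S, Y. rewrite Ht0, Pr0.
    replace (2 * 0) with 0 by ring. rewrite cos_0, sin_0. field. apply Rgt_not_eq, rpos. }
  pose proof (sin2_cos2 (2 * phi t)) as Hsc. unfold Rsqr in Hsc.
  unfold C, S in *. rewrite <- HC. split.
  - transitivity (X t * (sin (2 * phi t) * sin (2 * phi t) + cos (2 * phi t) * cos (2 * phi t)));
      [rewrite Hsc; ring|]. 
    transitivity ((X t * cos (2 * phi t) + Y t * sin (2 * phi t)) * cos (2 * phi t) + 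
       (X t * sin (2 * phi t) - Y t * cos (2 * phi t)) * sin (2 * phi t)); [ring|].
    rewrite HS. ring.
  - transitivity (Y t * (sin (2 * phi t) * sin (2 * phi t) + cos (2 * phi t) * cos (2 * phi t)));
      [rewrite Hsc; ring|]. 
    transitivity ((X t * cos (2 * phi t) + Y t * sin (2 * phi t)) * sin (2 * phi t) - 
       (X t * sin (2 * phi t) - Y t * cos (2 * phi t)) * cos (2 * phi t)); [ring|].
    rewrite HS. ring.
Qed.

Lemma X0_nonneg : 0 <= X0.
Proof.
  destruct (Rle_or_lt 0 X0) as [|Hneg]; auto. exfalso.
  assert (Hle : forall t, X t <= X0).
  { intros t. unfold X0, X. pose proof (rpos t). pose proof (rpos t0). pose proof (Hmin t).
    assert (/ r t ^ 2 <= / r t0 ^ 2).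
    { apply Rinv_le_contravar; [nra|]. apply pow_incr; lra. }
    unfold Rdiv. nra. }
  assert (HY : forall t, Y t = 0).
  { intros t. destruct (XY_form t) as [E1 E2]. pose proof (Hle t) as Ht. rewrite E1 in Ht.
    assert (cos (2 * phi t) = 1) as Hc. { pose proof (COS_bound (2 * phi t)). nra. }
    pose proof (sin2_cos2 (2 * phi t)) as Hsc. unfold Rsqr in Hsc. rewrite Hc in Hsc.
    rewrite E2. assert (sin (2 * phi t) = 0) as -> by nra. ring. }
  pose proof (dY t0) as D.
  assert (D' : is_derive Y t0 0).
  { apply (is_derive_ext (fun _ => 0)). intros; rewrite HY; reflexivity. apply is_derive_Reals, derivable_pt_lim_const. }
  pose proof (is_derive_unique _ _ _ D) as U1. pose proof (is_derive_unique _ _ _ D') as U2.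
  rewrite U1 in U2. fold X0 in U2.
  assert (0 < w t0). { unfold w. pose proof (rpos t0). assert (0 < r t0 ^ 2) by nra. assert (0 < 1 + rho * r t0 ^ 2) by nra. apply Rdiv_lt_0_compat; [lra|]. apply Rmult_lt_0_compat; lra. }
  nra.
Qed.

Lemma orbit t : L ^ 2 / r t ^ 2 = E + sqrt A2 * cos (2 * phi t) /\
                L * Pr t / r t = sqrt A2 * sin (2 * phi t) /\ 0 <= A2.
Proof.
  assert (HA : X0 ^ 2 = A2).
  { rewrite <- (XYsq t0). fold X0. unfold Y. rewrite Pr0. field. apply Rgt_not_eq, rpos. }
  assert (Hs : sqrt A2 = X0).
  { rewrite <- HA. apply sqrt_pow2. apply X0_nonneg. }
  destruct (XY_form t) as [E1 E2]. rewrite Hs. unfold X, Y in *. split; [|split]; try lra.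
  rewrite <- HA. nra.
Qed.


Hypothesis Hb : 2 * rho * E < xi.

Lemma Epos : 0 < E.
Proof.
  pose proof (energy t0) as En. pose proof (rpos t0).
  assert (0 < L ^ 2 / r t0 ^ 2). { apply Rdiv_lt_0_compat; nra. }
  assert (0 <= Pr t0 ^ 2) by nra.
  assert (xi * r t0 ^ 2 > 2 * rho * E * r t0 ^ 2) by (apply Rmult_gt_compat_r; nra).
  nra.
Qed.

Lemma a_lt_E : sqrt A2 < E.
Proof.
  pose proof Epos. rewrite <- (sqrt_pow2 E) by lra. apply sqrt_lt_1_alt. split.
  - apply (proj2 (proj2 (orbit t0))).
  - unfold A2. assert (0 < L ^ 2) by nra. nra.
Qed.

Definition uu x := (E + sqrt A2 * cos (2 * x)) / L ^ 2.
Definition gg x := (uu x + rho) / (L * uu x ^ 2).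

Lemma uu_pos x : 0 < uu x.
Proof.
  unfold uu. pose proof a_lt_E. pose proof (COS_bound (2 * x)).
  pose proof (sqrt_pos A2). apply Rdiv_lt_0_compat; nra.
Qed.

Lemma gg_pos x : 0 < gg x.
Proof. unfold gg. pose proof (uu_pos x). apply Rdiv_lt_0_compat; [lra|]. apply Rmult_lt_0_compat; [lra|]. apply pow_lt; lra. Qed.

Lemma gg_der x : ex_derive gg x.
Proof.
  unfold gg, uu. pose proof (uu_pos x) as H. unfold uu in H. auto_derive.
  set (v := (E + sqrt A2 * cos (2 * x))) in *.
  change (v * / (L * (L * 1))) with (v / L ^ 2).
  apply Rgt_not_eq. apply Rmult_lt_0_compat; [lra|]. apply Rmult_lt_0_compat; [lra|]. lra.
Qed.

Lemma gg_cont x : continuous gg x.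
Proof. apply (ex_derive_continuous (K:=R_AbsRing) (V:=R_NormedModule)), gg_der. Qed.

Definition GG x := RInt gg 0 x.

Lemma GG_der x : is_derive GG x (gg x).
Proof.
  apply (is_derive_RInt gg GG 0 x); [|apply gg_cont].
  apply filter_forall. intros y. unfold GG. apply (RInt_correct (V := R_CompleteNormedModule)), (ex_RInt_continuous (V := R_CompleteNormedModule)).
  intros; apply gg_cont.
Qed.

Lemma GG_incr x y : x < y -> GG x < GG y.
Proof.
  intros Hxy. apply (incr_function GG m_infty p_infty gg); simpl; auto.
  - intros; apply GG_der.
  - intros; apply gg_pos.
Qed.

Lemma GG_inj x y : GG x = GG y -> x = y.
Proof.
  intros H. destruct (Rtotal_order x y) as [h|[h|h]]; auto.
  - apply GG_incr in h; lra.
  - apply GG_incr in h; lra.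
Qed.

Lemma phi_eq t : uu (phi t) = 1 / r t ^ 2.
Proof.
  destruct (orbit t) as [O1 _]. unfold uu. rewrite <- O1. field.
  pose proof (rpos t); split; nra.
Qed.

Lemma K_der t : is_derive (fun t => GG (phi t) - t) t 0.
Proof.
  destruct (derivs t) as [_ [D2 _]].
  replace (0:R) with ((L / (r t ^ 2 * (1 + rho * r t ^ 2))) * gg (phi t) - 1).
  - apply (is_derive_minus (fun t => GG (phi t)) (fun t => t) t _ 1).
    + apply (is_derive_comp GG phi). apply GG_der. exact D2.
    + apply (is_derive_id (K:=R_AbsRing) t).
  - unfold gg. rewrite phi_eq. pose proof (rpos t). field. split; nra.
Qed.

Lemma M_der x : is_derive (fun x => GG (x + 2 * PI) - GG x) x 0.
Proof.
  replace (0:R) with (1 * gg (x + 2 * PI) - gg x).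
  - apply (is_derive_minus (fun x => GG (x + 2 * PI)) GG x _ (gg x)); [|apply GG_der].
    apply (is_derive_comp GG (fun x => x + 2 * PI) x _ 1); [apply GG_der|].
    auto_derive; auto; ring.
  - unfold gg, uu. replace (2 * (x + 2 * PI)) with (2 * x + 2 * INR 2 * PI) by (simpl; ring).
    rewrite cos_period. ring.
Qed.

Lemma periodic : exists T, 0 < T /\ forall t,
        r (t + T) = r t /\ phi (t + T) = phi t + 2 * PI /\ Pr (t + T) = Pr t.
Proof.
  exists (GG (0 + 2 * PI) - GG 0). split.
  { apply Rlt_Rminus, GG_incr. pose proof PI_RGT_0; lra. }
  intros t.
  set (P := GG (0 + 2 * PI) - GG 0).
  assert (Hph : phi (t + P) = phi t + 2 * PI).
  { apply GG_inj.
    pose proof (const_of _ K_der (t + P) t) as K1. simpl in K1.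
    pose proof (const_of _ M_der (phi t) 0) as M1. simpl in M1.
    unfold P in *. lra. }
  assert (Hr : r (t + P) ^ 2 = r t ^ 2).
  { pose proof (phi_eq (t + P)) as E1. pose proof (phi_eq t) as E2.
    rewrite Hph in E1. unfold uu in E1, E2.
    replace (2 * (phi t + 2 * PI)) with (2 * phi t + 2 * INR 2 * PI) in E1 by (simpl; ring).
    rewrite cos_period in E1. rewrite E2 in E1.
    pose proof (rpos t). pose proof (rpos (t + P)).
    assert (0 < r t ^ 2) by nra. assert (0 < r (t+P) ^ 2) by nra.
    apply (Rmult_eq_reg_r (/ (r t ^ 2 * r (t+P) ^ 2))).
    2: apply Rinv_neq_0_compat; nra.
    transitivity (1 / r t ^ 2); [field; lra|]. rewrite E1. field; lra. }
  assert (Hr' : r (t + P) = r t).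
  { pose proof (rpos t). pose proof (rpos (t + P)). nra. }
  split; [exact Hr'|split; [exact Hph|]].
  destruct (orbit t) as [_ [O2 _]]. destruct (orbit (t + P)) as [_ [O3 _]].
  rewrite Hph in O3.
  replace (2 * (phi t + 2 * PI)) with (2 * phi t + 2 * INR 2 * PI) in O3 by (simpl; ring).
  rewrite sin_period in O3. rewrite <- O2, Hr' in O3.
  pose proof (rpos t).
  apply (Rmult_eq_reg_l (L / r t)); [|apply Rgt_not_eq, Rdiv_lt_0_compat; lra].
  unfold Rdiv in *. lra.
Qed.

End Traj.

Lemma ecc_eq rho xi E L : E <> 0 -> 0 <= A2 rho xi E L ->
  ecc rho xi E L = sqrt (A2 rho xi E L) / Rabs E.
Proof.
  intros HE HA. unfold ecc, A2 in *.
  assert (0 < Rabs E) by (apply Rabs_pos_lt; auto).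
  assert (Habs : E ^ 2 = Rabs E ^ 2) by (rewrite <- Rsqr_pow2, <- Rsqr_pow2; apply Rsqr_abs).
  replace (1 + L ^ 2 / E ^ 2 * (2 * rho * E - xi)) with
    ((E ^ 2 + L ^ 2 * (2 * rho * E - xi)) / (Rabs E) ^ 2).
  2:{ rewrite <- Habs. field. auto. }
  rewrite sqrt_div_alt by (apply pow_lt; lra). rewrite sqrt_pow2 by lra. reflexivity.
Qed.

Lemma sgn_abs E : E <> 0 -> sgn E = E / Rabs E.
Proof.
  intros H. unfold sgn. destruct (Rlt_dec 0 E).
  - rewrite Rabs_right by lra. field; lra.
  - destruct (Rlt_dec E 0); [|lra]. rewrite Rabs_left by lra. field; lra.
Qed.

End Helpers.
Import Helpers.

Theorem proposition10 (rho xi E L : R) (r phi Pr Pphi : R -> R) :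
  0 < rho -> 0 < L ->
  hamiltonian_trajectory (H0 rho xi) r phi Pr Pphi ->
  (forall t, H0 rho xi (r t) (phi t) (Pr t) (Pphi t) = E) ->
  (forall t, Pphi t = L) ->
  (* phi normalized: phi = 0 at a point where r is minimal *)
  (exists t0, phi t0 = 0 /\ forall t, r t0 <= r t) ->
  (* (a) *)
  (xi / (2 * rho) <= E ->
     (E = 0 -> forall t, L / r t ^ 2 = sqrt (Rabs xi) * cos (2 * phi t)) /\
     (E <> 0 -> forall t,
        L ^ 2 / (Rabs E * r t ^ 2) = sgn E + ecc rho xi E L * cos (2 * phi t)))
  /\
  (* (b) *)
  (0 <= rho ^ 2 + xi / L ^ 2 -> Eplus rho xi L < E < xi / (2 * rho) ->
     (forall t, L ^ 2 / (E * r t ^ 2) = 1 + ecc rho xi E L * cos (2 * phi t)) /\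
     (* the trajectory is closed (periodic) *)
     (exists T, 0 < T /\ forall t,
        r (t + T) = r t /\ phi (t + T) = phi t + 2 * PI /\ Pr (t + T) = Pr t)).
Proof.
  intros Hrho HL Htr HE HP [t0 [Ht0 Hmin]].
  pose proof (orbit rho xi E L r phi Pr Pphi Hrho HL Htr HE HP t0 Ht0 Hmin) as O.
  assert (HA : 0 <= A2 rho xi E L) by apply (O t0).
  assert (Hgen : E <> 0 -> forall t,
        L ^ 2 / (Rabs E * r t ^ 2) = sgn E + ecc rho xi E L * cos (2 * phi t)).
  { intros HE0 t. destruct (O t) as [O1 _]. rewrite ecc_eq, sgn_abs by auto.
    assert (0 < Rabs E) by (apply Rabs_pos_lt; auto).
    pose proof (proj1 (Htr t)).
    replace (L ^ 2 / (Rabs E * r t ^ 2)) with ((L ^ 2 / r t ^ 2) / Rabs E) by (field; split; lra).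
    rewrite O1. field. lra. }
  split.
  - intros _. split; [|exact Hgen].
    intros HE0 t. subst E. destruct (O t) as [O1 _].
    unfold A2 in *.
    assert (Hxi : xi <= 0) by (assert (0 < L ^ 2) by nra; nra).
    rewrite Rabs_left1 by auto.
    replace (0 ^ 2 + L ^ 2 * (2 * rho * 0 - xi)) with (L ^ 2 * (- xi)) in O1 by ring.
    rewrite sqrt_mult_alt in O1 by nra. rewrite sqrt_pow2 in O1 by lra.
    pose proof (proj1 (Htr t)).
    apply (Rmult_eq_reg_l L); [|lra].
    replace (L * (L / r t ^ 2)) with (L ^ 2 / r t ^ 2) by (field; lra).
    rewrite O1. ring.
  - intros _ [_ Hb].
    assert (Hb' : 2 * rho * E < xi).
    { apply (Rmult_lt_compat_l (2 * rho)) in Hb; [|lra].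
      replace (2 * rho * (xi / (2 * rho))) with xi in Hb by (field; lra). lra. }
    pose proof (Epos rho xi E L r phi Pr Pphi Hrho HL Htr HE HP t0 Hb') as HEp.
    split.
    + intros t. pose proof (Hgen ltac:(lra) t) as G.
      rewrite Rabs_right in G by lra. unfold sgn in G.
      destruct (Rlt_dec 0 E); [exact G|lra].
    + exact (periodic rho xi E L r phi Pr Pphi Hrho HL Htr HE HP t0 Ht0 Hmin Hb').
Qed.
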